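(* Let $K$ be a field and let $R\in\mathfrak R_K$ be of Loewy length $\sigma+1$ and top layer dimension $n$. Then there is a $K$-algebra direct product decomposition $R=R_0\boxplus\cdots\boxplus R_{n-1}$ where for each $i<n$, $R_i\in\mathfrak R_K$ has Loewy length $\sigma+1$ and top layer dimension $1$.
   Context: Socle sequence of a ring: $S_0=0$, $S_{\alpha+1}/S_\alpha=\mathrm{Soc}(R/S_\alpha)$, unions at limits; semiartinian with Loewy length $\sigma+1$ means $S_{\sigma+1}=R$ and $S_\sigma\neq R$; layers $L_\alpha=S_{\alpha+1}/S_\alpha$. $K^{(\lambda)}$ is the direct sum of $\lambda$ copies of $K$ as a $K$-algebra without unit. $\mathfrak R_K$ is the class of commutative von Neumann regular semiartinian $K$-algebras $R$ of Loewy length $\sigma+1$ such that for each $\alpha\le\sigma$ there is a cardinal $\lambda_\alpha>0$ and a $K$-linear isomorphism of $K$-algebras without unit $L_\alpha\cong K^{(\lambda_\alpha)}$; the finite number $\lambda_\sigma$ is the top layer dimension. $\boxplus$ denotes ring direct product. *)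

(* Defs.v *)
From Stdlib Require Lists.List.
From HB Require Import structures.
From mathcomp Require Import all_boot all_order all_algebra.
Set Implicit Arguments. Unset Strict Implicit. Unset Printing Implicit Defensive.
Import GRing.Theory.
Local Open Scope ring_scope.

Section RK.
Variables (K : fieldType) (R : comAlgType K).

Definition subI (I J : R -> Prop) := forall x, I x -> J x.

Definition is_ideal (I : R -> Prop) :=
  [/\ I 0, (forall x y, I x -> I y -> I (x + y)) & (forall r x, I x -> I (r * x))].

(* J covers I: J/I is a minimal (nonzero) ideal of R/I. *)
Definition covers (I J : R -> Prop) :=
  [/\ is_ideal J, subI I J, ~ subI J I &
      forall M, is_ideal M -> subI I M -> subI M J -> subI M I \/ subI J M].

(* soc_over I = preimage in R of Soc(R/I): the ideal generated by I and all
   ideals J such that J/I is a minimal ideal of R/I. *)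
Definition soc_over (I : R -> Prop) : R -> Prop := fun x =>
  forall M, is_ideal M -> subI I M -> (forall J, covers I J -> subI J M) -> M x.

Definition zeroI : R -> Prop := fun x => x = 0.
Definition fullI : R -> Prop := fun _ => True.

(* The members of the socle sequence (S_alpha)_alpha: the least family
   containing 0, closed under S |-> soc_over S and under unions of
   nonempty subfamilies (limit stages). *)
Inductive Lsoc : (R -> Prop) -> Prop :=
| Lsoc0 : Lsoc zeroI
| LsocS I : Lsoc I -> Lsoc (soc_over I)
| LsocL (F : (R -> Prop) -> Prop) :
    (exists I, F I) -> (forall I, F I -> Lsoc I) ->
    Lsoc (fun x => exists I, F I /\ I x).

(* The layer soc_over I / I is isomorphic, as a K-algebra without unit and
   K-linearly, to K^(X) (finitely supported functions X -> K, pointwise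
   operations); phi restricted to soc_over I is the quotient map composed
   with that isomorphism. *)
Definition fin_supp (X : Type) (g : X -> K) :=
  exists s : list X, forall t, g t <> 0 -> Stdlib.Lists.List.In t s.

Definition layer_iso (I : R -> Prop) (X : Type) :=
  exists phi : R -> X -> K,
  [/\ (forall a x y, soc_over I x -> soc_over I y ->
         phi (a *: x + y) = (fun t => a * phi x t + phi y t)),
      (forall x y, soc_over I x -> soc_over I y ->
         phi (x * y) = (fun t => phi x t * phi y t)),
      (forall x, soc_over I x -> fin_supp (phi x)),
      (forall g, fin_supp g -> exists x, soc_over I x /\ phi x = g) &
      (forall x, soc_over I x -> (phi x = (fun _ => 0) <-> I x))].

Definition vN_regular := forall x : R, exists y, x = x * y * x.

Definition in_RK :=
  [/\ vN_regular,
      (* semiartinian of successor Loewy length sigma+1: S_sigma <> R = S_(sigma+1) *)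
      exists I, [/\ Lsoc I, ~ subI fullI I & subI fullI (soc_over I)] &
      (* every layer L_alpha (alpha <= sigma, i.e. S_alpha <> R) is K^(lambda_alpha), lambda_alpha > 0 *)
      forall I, Lsoc I -> ~ subI fullI I ->
        exists (X : Type) (_ : X), layer_iso I X].

(* top layer dimension n: L_sigma = R/S_sigma is isomorphic to K^n *)
Definition top_dim (n : nat) :=
  exists I, [/\ Lsoc I, ~ subI fullI I, subI fullI (soc_over I) &
                layer_iso I 'I_n].

End RK.

(* Same Loewy length: the socle chains {S_alpha : alpha <= sigma+1}, ordered
   by inclusion, are order-isomorphic. *)
Definition same_loewy (K : fieldType) (R R' : comAlgType K) :=
  exists f : (R -> Prop) -> (R' -> Prop),
  [/\ (forall I, Lsoc I -> Lsoc (f I)),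
      (forall J, Lsoc J -> exists I, Lsoc I /\ forall x, f I x <-> J x) &
      (forall I J, Lsoc I -> Lsoc J -> (subI I J <-> subI (f I) (f J)))].

(* Main.v *)
Require Import Defs.
From HB Require Import structures.
From mathcomp Require Import all_boot all_order all_algebra.
From Stdlib Require Import Classical ClassicalEpsilon FunctionalExtensionality PropExtensionality.
From mathcomp Require Import ring.
Set Implicit Arguments. Unset Strict Implicit. Unset Printing Implicit Defensive.
Import GRing.Theory.
Set Warnings "-redundant-canonical-projection -notation-overridden -ambiguous-paths".
Local Open Scope ring_scope.

Definition ReT (K : fieldType) (R : comAlgType K) (e : R) (He : e * e = e) (Hn : e != 0) :=
  {x : R | x * e == x}.

Section ReDefs.
Variables (K : fieldType) (R : comAlgType K) (e : R) (He : e * e = e) (Hn : e != 0).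
Local Notation T := (ReT He Hn).
Definition Re_val (x : T) : R := sval x.
Lemma Re_valP (x : T) : Re_val x * e = Re_val x.
Proof. by case: x => x /= /eqP. Qed.
Lemma Re_inj : injective Re_val.
Proof. by move=> [x px] [y py] /= exy; subst y; rewrite (bool_irrelevance px py). Qed.
Definition Re_mk (x : R) : T := exist _ (x * e) (introT eqP (etrans (esym (mulrA _ _ _)) (congr1 _ He))).
Lemma Re_mkK x : Re_val (Re_mk x) = x * e. Proof. by []. Qed.
Lemma Re_valK (x : T) : Re_mk (Re_val x) = x.
Proof. by apply: Re_inj; rewrite Re_mkK Re_valP. Qed.
Definition Re_zero : T := Re_mk 0.
Definition Re_add (x y : T) : T := Re_mk (Re_val x + Re_val y).
Definition Re_opp (x : T) : T := Re_mk (- Re_val x).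
Definition Re_mul (x y : T) : T := Re_mk (Re_val x * Re_val y).
Definition Re_one : T := Re_mk 1.
Definition Re_scale (a : K) (x : T) : T := Re_mk (a *: Re_val x).
Lemma Re_zeroE : Re_val Re_zero = 0. Proof. by rewrite Re_mkK mul0r. Qed.
Lemma Re_addE x y : Re_val (Re_add x y) = Re_val x + Re_val y.
Proof. by rewrite Re_mkK mulrDl !Re_valP. Qed.
Lemma Re_oppE x : Re_val (Re_opp x) = - Re_val x.
Proof. by rewrite Re_mkK mulNr !Re_valP. Qed.
Lemma Re_mulE x y : Re_val (Re_mul x y) = Re_val x * Re_val y.
Proof. by rewrite Re_mkK -mulrA Re_valP. Qed.
Lemma Re_oneE : Re_val Re_one = e.
Proof. by rewrite Re_mkK mul1r. Qed.
Lemma Re_scaleE a x : Re_val (Re_scale a x) = a *: Re_val x.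
Proof. by rewrite Re_mkK -scalerAl Re_valP. Qed.
End ReDefs.

HB.instance Definition _ (K : fieldType) (R : comAlgType K) (e : R) (He : e * e = e) (Hn : e != 0) := Choice.on (@ReT K R e He Hn).

Section ReAx.
Variables (K : fieldType) (R : comAlgType K) (e : R) (He : e * e = e) (Hn : e != 0).
Local Notation T := (ReT He Hn).
Local Notation v := (@Re_val K R e He Hn).
Lemma Re_addA : associative (@Re_add K R e He Hn).
Proof. by move=> x y z; apply: Re_inj; rewrite !Re_addE addrA. Qed.
Lemma Re_addC : commutative (@Re_add K R e He Hn).
Proof. by move=> x y; apply: Re_inj; rewrite !Re_addE addrC. Qed.
Lemma Re_add0 : left_id (Re_zero He Hn) (@Re_add K R e He Hn).
Proof. by move=> x; apply: Re_inj; rewrite !Re_addE Re_zeroE add0r. Qed.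
Lemma Re_addN : left_inverse (Re_zero He Hn) (@Re_opp K R e He Hn) (@Re_add K R e He Hn).
Proof. by move=> x; apply: Re_inj; rewrite !Re_addE Re_oppE Re_zeroE addNr. Qed.
End ReAx.

HB.instance Definition _ (K : fieldType) (R : comAlgType K) (e : R) (He : e * e = e) (Hn : e != 0) := GRing.isZmodule.Build (@ReT K R e He Hn)
  (@Re_addA K R e He Hn) (@Re_addC K R e He Hn) (@Re_add0 K R e He Hn) (@Re_addN K R e He Hn).

Section ReAx2.
Variables (K : fieldType) (R : comAlgType K) (e : R) (He : e * e = e) (Hn : e != 0).
Local Notation T := (ReT He Hn).
Lemma Re_mulA : associative (@Re_mul K R e He Hn).
Proof. by move=> x y z; apply: Re_inj; rewrite !Re_mulE mulrA. Qed.
Lemma Re_mulC : commutative (@Re_mul K R e He Hn).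
Proof. by move=> x y; apply: Re_inj; rewrite !Re_mulE mulrC. Qed.
Lemma Re_mul1 : left_id (Re_one He Hn) (@Re_mul K R e He Hn).
Proof. by move=> x; apply: Re_inj; rewrite !Re_mulE Re_oneE mulrC Re_valP. Qed.
Lemma Re_mulDl : left_distributive (@Re_mul K R e He Hn) +%R.
Proof. by move=> x y z; apply: Re_inj; rewrite !Re_mulE !Re_addE !Re_mulE mulrDl. Qed.
Lemma Re_one0 : Re_one He Hn != 0.
Proof. apply/eqP => /(congr1 (@Re_val _ _ _ _ _)); rewrite Re_oneE Re_zeroE; exact/eqP. Qed.
End ReAx2.

HB.instance Definition _ (K : fieldType) (R : comAlgType K) (e : R) (He : e * e = e) (Hn : e != 0) := GRing.Zmodule_isComNzRing.Build (@ReT K R e He Hn)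
  (@Re_mulA K R e He Hn) (@Re_mulC K R e He Hn) (@Re_mul1 K R e He Hn) (@Re_mulDl K R e He Hn) (@Re_one0 K R e He Hn).

Section ReAx3.
Variables (K : fieldType) (R : comAlgType K) (e : R) (He : e * e = e) (Hn : e != 0).
Lemma Re_scaleA a b (x : ReT He Hn) : Re_scale a (Re_scale b x) = Re_scale (a * b) x.
Proof. by apply: Re_inj; rewrite !Re_scaleE scalerA. Qed.
Lemma Re_scale1 : left_id 1 (@Re_scale K R e He Hn).
Proof. by move=> x; apply: Re_inj; rewrite !Re_scaleE scale1r. Qed.
Lemma Re_scaleDr : right_distributive (@Re_scale K R e He Hn) +%R.
Proof. by move=> a x y; apply: Re_inj; rewrite !Re_scaleE !Re_addE !Re_scaleE scalerDr. Qed.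
Lemma Re_scaleDl (x : ReT He Hn) : {morph (@Re_scale K R e He Hn)^~ x : a b / a + b}.
Proof. by move=> a b; apply: Re_inj; rewrite !Re_scaleE !Re_addE !Re_scaleE scalerDl. Qed.
End ReAx3.

HB.instance Definition _ (K : fieldType) (R : comAlgType K) (e : R) (He : e * e = e) (Hn : e != 0) := GRing.Zmodule_isLmodule.Build K (@ReT K R e He Hn)
  (@Re_scaleA K R e He Hn) (@Re_scale1 K R e He Hn) (@Re_scaleDr K R e He Hn) (@Re_scaleDl K R e He Hn).

Lemma Re_scaleAl (K : fieldType) (R : comAlgType K) (e : R) (He : e * e = e) (Hn : e != 0)
  (a : K) (u v : ReT He Hn) : a *: (u * v) = (a *: u) * v.
Proof. by apply: Re_inj; rewrite !Re_scaleE !Re_mulE !Re_scaleE scalerAl. Qed.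

HB.instance Definition _ (K : fieldType) (R : comAlgType K) (e : R) (He : e * e = e) (Hn : e != 0) := GRing.Lmodule_isLalgebra.Build K (@ReT K R e He Hn)
  (@Re_scaleAl K R e He Hn).
HB.instance Definition _ (K : fieldType) (R : comAlgType K) (e : R) (He : e * e = e) (Hn : e != 0) := GRing.Lalgebra_isComAlgebra.Build K (@ReT K R e He Hn).


Section Proj.
Variables (K : fieldType) (R : comAlgType K) (e : R) (He : e * e = e) (Hn : e != 0).
Definition Re_proj (x : R) : ReT He Hn := Re_mk He Hn x.
Lemma Re_proj_zmod : zmod_morphism Re_proj.
Proof. by move=> x y; apply: Re_inj; rewrite Re_addE Re_oppE /Re_proj !Re_mkK mulrBl. Qed.
Lemma Re_proj_mult : monoid_morphism Re_proj.
Proof.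
split; first by apply: Re_inj; rewrite Re_oneE.
by move=> x y; apply: Re_inj; rewrite Re_mulE /Re_proj !Re_mkK mulrACA He.
Qed.
Lemma Re_proj_scal : scalable Re_proj.
Proof. by move=> a x; apply: Re_inj; rewrite Re_scaleE /Re_proj !Re_mkK scalerAl. Qed.
HB.instance Definition _ := GRing.isZmodMorphism.Build R (ReT He Hn) Re_proj Re_proj_zmod.
HB.instance Definition _ := GRing.isMonoidMorphism.Build R (ReT He Hn) Re_proj Re_proj_mult.
HB.instance Definition _ := GRing.isScalable.Build K R (ReT He Hn) *:%R Re_proj Re_proj_scal.
Definition Re_lrm : {lrmorphism R -> ReT He Hn} := Re_proj.
End Proj.

Lemma pred_ext (T : Type) (P Q : T -> Prop) : (forall x, P x <-> Q x) -> P = Q.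
Proof. by move=> H; apply: functional_extensionality => x; apply: propositional_extensionality. Qed.

Section Soc.
Variables (K : fieldType) (R : comAlgType K).
Implicit Types I J M C c x d : R -> Prop.

Lemma soc_ideal I : is_ideal (soc_over I).
Proof.
split.
- by move=> M [] ? _ _ _ _.
- by move=> x y Hx Hy M HM HIM HC; case: (HM) => _ Hadd _; apply: Hadd; [apply: Hx|apply: Hy].
- by move=> r x Hx M HM HIM HC; case: (HM) => _ _ Hmul; apply: Hmul; apply: Hx.
Qed.

Lemma sub_soc I : subI I (soc_over I).
Proof. by move=> x Ix M _ HIM _; apply: HIM. Qed.

Lemma cover_sub_soc I C : covers I C -> subI C (soc_over I).
Proof. by move=> HC x Cx M _ _ H; apply: (H C HC). Qed.

Lemma Lsoc_0 I : Lsoc I -> I 0.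
Proof.
elim=> [|J _ _|F [J FJ] _ IH].
- by [].
- by case: (soc_ideal J).
- by exists J; split => //; apply: IH.
Qed.

Definition ltI (I J : R -> Prop) := subI I J /\ ~ subI J I.
Definition extreme (c : R -> Prop) := forall x, Lsoc x -> ltI x c -> subI (soc_over x) c.

Lemma ext_L1 c : Lsoc c -> extreme c -> forall x, Lsoc x -> subI x c \/ subI (soc_over c) x.
Proof.
move=> Lc Ec x; elim=> [|y Ly IH|F [J FJ] HF IH].
- by left => z /= ->; apply: Lsoc_0.
- case: IH => [yc|cy].
  + case: (classic (subI c y)) => [cy|ncy].
    * right; have -> : y = c by apply: pred_ext => z; split; [apply: yc|apply: cy].
      by [].
    * by left; apply: Ec.
  + by right => z /cy; apply: sub_soc.
- case: (classic (exists J, F J /\ subI (soc_over c) J)) => [[J' [FJ' H]]|H].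
  + by right => z /H Jz; exists J'.
  + left => z [J' [FJ' J'z]].
    case: (IH J' FJ') => [|H']; first by apply.
    by exfalso; apply: H; exists J'.
Qed.

Lemma ext_all c : Lsoc c -> extreme c.
Proof.
elim=> [|d Ld Ed|F [J FJ] HF IH].
- move=> x Lx [_ H]; exfalso; apply: H => z /= ->; exact: Lsoc_0.
- move=> x Lx [xd nd].
  case: (ext_L1 Ld Ed Lx) => [xd'|dx]; last by exfalso; apply: nd.
  case: (classic (subI d x)) => [dx|ndx].
  + have -> : x = d by apply: pred_ext => z; split; [apply: xd'|apply: dx].
    by [].
  + by move=> z /(Ed x Lx (conj xd' ndx)); apply: sub_soc.
- move=> x Lx [xc ncx].
  have [d [Fd ndx]] : exists d, F d /\ ~ subI d x.
    apply: NNPP => H; apply: ncx => z [d [Fd dz]].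
    by apply: NNPP => nz; apply: H; exists d; split => // Hs; apply: nz; apply: Hs.
  case: (ext_L1 (HF d Fd) (IH d Fd) Lx) => [xd|dx]; last first.
    by exfalso; apply: ndx => z /(sub_soc (I:=d)) /dx.
  by move=> z /(IH d Fd x Lx (conj xd ndx)) dz; exists d.
Qed.

Lemma chain2 c x : Lsoc c -> Lsoc x -> subI x c \/ subI (soc_over c) x.
Proof. by move=> Lc; apply: ext_L1 => //; apply: ext_all. Qed.

Lemma chain c x : Lsoc c -> Lsoc x -> subI x c \/ subI c x.
Proof.
move=> Lc Lx; case: (chain2 Lc Lx) => [|H]; first by left.
by right => z /(sub_soc (I:=c)) /H.
Qed.

Lemma Lsoc_ideal I : Lsoc I -> is_ideal I.
Proof.
move=> LI; elim: LI => [|J _ _|F [J FJ] HF IH].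
- split => //=; first by move=> x y -> ->; rewrite addr0.
  by move=> r x ->; rewrite mulr0.
- exact: soc_ideal.
- split.
  + by exists J; split => //; apply: Lsoc_0; apply: HF.
  + move=> x y [J1 [F1 x1]] [J2 [F2 y2]].
    case: (chain (HF _ F1) (HF _ F2)) => H.
    * exists J1; split => //; case: (IH _ F1) => _ Ha _; apply: Ha => //; exact: H.
    * exists J2; split => //; case: (IH _ F2) => _ Ha _; apply: Ha => //; exact: H.
  + move=> r x [J1 [F1 x1]]; exists J1; split => //; case: (IH _ F1) => _ _ Hm; exact: Hm.
Qed.

End Soc.

Section Ideal.
Variables (K : fieldType) (R : comAlgType K).
Variables (I : R -> Prop) (HI : is_ideal I).
Lemma idl0 : I 0. Proof. by case: HI. Qed.
Lemma idlD x y : I x -> I y -> I (x + y). Proof. by case: HI => _ H _; apply: H. Qed.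
Lemma idlM r x : I x -> I (r * x). Proof. by case: HI => _ _ H; apply: H. Qed.
Lemma idlMr r x : I x -> I (x * r). Proof. by rewrite mulrC; apply: idlM. Qed.
Lemma idlZ (a : K) x : I x -> I (a *: x).
Proof. by move=> Ix; rewrite -[x]mul1r scalerAl; apply: idlM. Qed.
Lemma idlN x : I x -> I (- x).
Proof. by move=> Ix; rewrite -scaleN1r; apply: idlZ. Qed.
Lemma idlB x y : I x -> I y -> I (x - y).
Proof. by move=> Ix Iy; apply: idlD => //; apply: idlN. Qed.
End Ideal.

Definition delta (X : Type) (K : fieldType) (t0 : X) : X -> K :=
  fun t => if excluded_middle_informative (t = t0) then 1 else 0.

Lemma delta_eq (X : Type) (K : fieldType) (t0 : X) : delta K t0 t0 = 1.
Proof. by rewrite /delta; by destruct excluded_middle_informative. Qed.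
Lemma delta_neq (X : Type) (K : fieldType) (t0 t : X) : t <> t0 -> delta K t0 t = 0.
Proof. by rewrite /delta; by destruct excluded_middle_informative. Qed.
Lemma delta_fin (X : Type) (K : fieldType) (t0 : X) : fin_supp (delta K t0).
Proof.
exists (t0 :: nil) => t; rewrite /delta; destruct excluded_middle_informative as [e|ne].
  by move=> _; left; rewrite e.
by move=> /(_ erefl).
Qed.

Lemma fun_neq0 (X : Type) (K : fieldType) (g : X -> K) : g <> (fun _ => 0) -> exists t, g t <> 0.
Proof.
move=> H; apply: NNPP => H'; apply: H; apply: functional_extensionality => t.
by apply: NNPP => H2; apply: H'; exists t.
Qed.

Section Layer.
Variables (K : fieldType) (R : comAlgType K).
Variables (I : R -> Prop) (HI : is_ideal I) (X : Type) (psi : R -> X -> K).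
Hypotheses (hlin : forall a x y, soc_over I x -> soc_over I y ->
         psi (a *: x + y) = (fun t => a * psi x t + psi y t))
  (hmul : forall x y, soc_over I x -> soc_over I y ->
         psi (x * y) = (fun t => psi x t * psi y t))
  (hsurj : forall g, fin_supp g -> exists x, soc_over I x /\ psi x = g)
  (hker : forall x, soc_over I x -> (psi x = (fun _ => 0) <-> I x)).
Local Notation S := (soc_over I).
Let HS : is_ideal S := soc_ideal I.

Lemma psiD x y t : S x -> S y -> psi (x + y) t = psi x t + psi y t.
Proof. by move=> Sx Sy; have := hlin 1 Sx Sy; rewrite scale1r => ->; rewrite mul1r. Qed.
Lemma psi0 t : psi 0 t = 0.
Proof.
have := psiD t (idl0 HS) (idl0 HS); rewrite addr0 => H.
by apply: (@addrI _ (psi 0 t)); rewrite addr0 -H.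
Qed.
Lemma psiZ a x t : S x -> psi (a *: x) t = a * psi x t.
Proof. by move=> Sx; have := hlin a Sx (idl0 HS); rewrite addr0 => ->; rewrite psi0 addr0. Qed.
Lemma psiB x y t : S x -> S y -> psi (x - y) t = psi x t - psi y t.
Proof.
move=> Sx Sy; have := hlin (-1) Sy Sx; rewrite scaleN1r addrC => ->.
by rewrite mulN1r addrC.
Qed.
Lemma psiM x y t : S x -> S y -> psi (x * y) t = psi x t * psi y t.
Proof. by move=> Sx Sy; rewrite hmul. Qed.
Lemma kerP x : S x -> (I x <-> forall t, psi x t = 0).
Proof.
move=> Sx; rewrite -hker //; split => [->//|H].
exact: functional_extensionality.
Qed.
Lemma lift_delta t0 : exists w, S w /\ forall s, psi w s = delta K t0 s.
Proof. by case: (hsurj (delta_fin K t0)) => w [Sw Pw]; exists w; rewrite Pw. Qed.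

Lemma KL x r w t : S x -> S w -> (forall s, psi w s = delta K t s) ->
  psi (x * r) t = psi x t * psi (w * r) t.
Proof.
move=> Sx Sw Pw; set c := psi x t.
set d := w * x - c *: w.
have Sd : S d by apply: (idlB HS) => //; [apply: (idlMr HS) | apply: (idlZ HS)].
have Id : I d.
  apply: (proj2 (kerP Sd)) => s; rewrite /d psiB ?psiM ?psiZ //; last by apply: (idlZ HS).
  - rewrite !Pw; case: (classic (s = t)) => [->|nst].
      by rewrite delta_eq mul1r mulr1 subrr.
    by rewrite delta_neq // mul0r mulr0 subrr.
  - exact: (idlMr HS).
have Idr : I (d * r) by apply: (idlMr HI).
have Sxr : S (x * r) by apply: (idlMr HS).
have Swr : S (w * r) by apply: (idlMr HS).
have Sdr : S (d * r) by apply: (idlMr HS).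
move/(kerP Sdr)/(_ t): Idr.
have -> : d * r = w * (x * r) - c *: (w * r).
  by rewrite /d mulrBl -scalerAl mulrA.
rewrite (psiB t (idlM HS w Sxr) (idlZ HS c Swr)) (psiM t Sw Sxr) (psiZ c t Swr) Pw delta_eq mul1r.
by move=> /eqP; rewrite subr_eq0 => /eqP.
Qed.

End Layer.

Section Res.
Variables (K : fieldType) (R : comAlgType K) (e : R) (He : e * e = e) (Hn : e != 0).
Local Notation T := (ReT He Hn).
Local Notation v := (@Re_val K R e He Hn).
Local Notation pr := (@Re_proj K R e He Hn).

Lemma v0 : v 0 = 0. Proof. exact: Re_zeroE. Qed.
Lemma vD x y : v (x + y) = v x + v y. Proof. exact: Re_addE. Qed.
Lemma vN x : v (- x) = - v x. Proof. exact: Re_oppE. Qed.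
Lemma vM x y : v (x * y) = v x * v y. Proof. exact: Re_mulE. Qed.
Lemma v1 : v 1 = e. Proof. exact: Re_oneE. Qed.
Lemma vZ a x : v (a *: x) = a *: v x. Proof. exact: Re_scaleE. Qed.
Lemma vP x : v x * e = v x. Proof. exact: Re_valP. Qed.
Lemma vpr x : v (pr x) = x * e. Proof. by []. Qed.
Lemma prv y : pr (v y) = y. Proof. exact: Re_valK. Qed.
Lemma v_inj : injective v. Proof. exact: Re_inj. Qed.
Lemma v_eq0 y : (v y = 0) <-> y = 0.
Proof. by split => [H|->]; [apply: v_inj; rewrite H v0 | exact: v0]. Qed.

Definition res (I : R -> Prop) : T -> Prop := fun y => I (v y).

Lemma res_ideal I : is_ideal I -> is_ideal (res I).
Proof.
move=> HI; split; rewrite /res.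
- by rewrite v0; apply: idl0.
- by move=> x y Hx Hy; rewrite vD; apply: idlD.
- by move=> r x Hx; rewrite vM; apply: idlM.
Qed.

Definition addI (I : R -> Prop) (D : T -> Prop) : R -> Prop :=
  fun x => exists d, D d /\ exists i, I i /\ x = v d + i.

Lemma addI_ideal I D : is_ideal I -> is_ideal D -> is_ideal (addI I D).
Proof.
move=> HI HD; split.
- by exists 0; split; [apply: idl0|exists 0; split; [apply: idl0|rewrite v0 addr0]].
- move=> x y [d [Dd [i [Ii ->]]]] [d' [Dd' [i' [Ii' ->]]]].
  exists (d + d'); split; first exact: idlD.
  by exists (i + i'); split; [apply: idlD|rewrite vD addrACA].
- move=> r x [d [Dd [i [Ii ->]]]].
  exists (pr r * d); split; first exact: idlM.
  exists (r * i); split; first exact: idlM.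
  by rewrite vM vpr mulrDr -mulrA (mulrC e) vP.
Qed.

Lemma I_addI I D : D 0 -> subI I (addI I D).
Proof. by move=> D0 x Ix; exists 0; split => //; exists x; split => //; rewrite v0 add0r. Qed.

Lemma res_addI I D : is_ideal I -> is_ideal D -> subI (res I) D ->
  forall y, addI I D (v y) -> D y.
Proof.
move=> HI HD HID y [d [Dd [i [Ii Hy]]]].
have ie : i * e = i.
  have -> : i = v y - v d by rewrite Hy addrC addKr.
  by rewrite mulrBl !vP.
have -> : y = d + pr i by apply: v_inj; rewrite vD vpr ie.
apply: idlD => //; apply: HID; rewrite /res vpr ie //.
Qed.

Lemma res_soc I : is_ideal I -> res (soc_over I) = soc_over (res I).
Proof.
move=> HI; apply: pred_ext => y; split.
- move=> Hy N HN HIN HCN.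
  pose M := fun x => N (pr x).
  have HM : is_ideal M.
    split; rewrite /M.
    + by rewrite rmorph0; apply: idl0.
    + by move=> x z Hx Hz; rewrite rmorphD; apply: idlD.
    + by move=> r x Hx; rewrite rmorphM; apply: idlM.
  suff : M (v y) by rewrite /M prv.
  apply: Hy => //.
    by move=> x Ix; apply: HIN; rewrite /res vpr; apply: idlMr.
  move=> C [HC1 HC2 HC3 HC4].
  pose Q := fun x => exists c, C c /\ exists i, I i /\ x = c * e + i.
  have HQ : is_ideal Q.
    split.
    + by exists 0; split; [apply: idl0|exists 0; split; [apply: idl0|rewrite mul0r addr0]].
    + move=> x z [c [Cc [i [Ii ->]]]] [c' [Cc' [i' [Ii' ->]]]].
      exists (c + c'); split; first exact: idlD.
      by exists (i + i'); split; [apply: idlD|rewrite mulrDl addrACA].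
    + move=> r x [c [Cc [i [Ii ->]]]].
      exists (r * c); split; first exact: idlM.
      by exists (r * i); split; [apply: idlM|rewrite mulrDr mulrA].
  have IQ : subI I Q.
    by move=> x Ix; exists 0; split; [apply: idl0|exists x; split => //; rewrite mul0r add0r].
  have QC : subI Q C.
    by move=> x [c [Cc [i [Ii ->]]]]; apply: idlD => //; [apply: idlMr|apply: HC2].
  case: (HC4 Q HQ IQ QC) => [QI|CQ].
    move=> c Cc; apply: HIN; rewrite /res vpr; apply: QI.
    by exists c; split => //; exists 0; split; [apply: idl0|rewrite addr0].
  have HD : covers (res I) (res C).
    split.
    + exact: res_ideal.
    + by move=> z; apply: HC2.
    + move=> H; apply: HC3 => c Cc; apply: NNPP => nIc.
      case: (CQ c Cc) => c' [Cc' [i [Ii Hc]]].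
      have : res I (pr c') by apply: H; rewrite /res vpr; apply: idlMr.
      by rewrite /res vpr => Ic'; apply: nIc; rewrite Hc; apply: idlD.
    + move=> P HP HIP HPC.
      have HP' : is_ideal (addI I P) by apply: addI_ideal.
      have IP' : subI I (addI I P) by apply: I_addI; apply: idl0.
      have P'C : subI (addI I P) C.
        by move=> x [d [Pd [i [Ii ->]]]]; apply: (idlD HC1); [apply: HPC|apply: HC2].
      case: (HC4 _ HP' IP' P'C) => [P'I|CP'].
      * left => p Pp; apply: P'I; exists p; split => //; exists 0.
        by split; [apply: idl0|rewrite addr0].
      * by right => z Cz; apply: (res_addI HI HP HIP); apply: CP'.
  move=> c Cc; apply: (HCN _ HD); rewrite /res vpr; apply: idlMr => //.
- move=> Hy M HM HIM HCM.
  apply: (Hy (res M)); first exact: res_ideal.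
    by move=> z; apply: HIM.
  move=> D [HD1 HD2 HD3 HD4].
  pose C := addI I D.
  have HC : is_ideal C by apply: addI_ideal.
  have IC : subI I C by apply: I_addI; apply: idl0.
  suff HCov : covers I C.
    move=> d Dd; apply: (HCM C HCov); exists d; split => //.
    by exists 0; split; [apply: idl0|rewrite addr0].
  split => //.
  + move=> H; apply: HD3 => d Dd; apply: H; exists d; split => //.
    by exists 0; split; [apply: idl0|rewrite addr0].
  + move=> P HP HIP HPC.
    have HresP : subI (res P) D.
      by move=> z Pz; apply: (res_addI HI HD1 HD2); apply: HPC.
    case: (HD4 (res P) (res_ideal HP) (fun z Iz => HIP _ Iz) HresP) => [PI|DP].
    * left => p Pp; case: (HPC p Pp) => d [Dd [i [Ii Hp]]].
      have Ed : v d = p - i by rewrite Hp addrK.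
      have Pd : res P d by rewrite /res Ed; apply: (idlB HP) => //; apply: HIP.
      by rewrite Hp; apply: (idlD HI) => //; apply: PI.
    * right => x [d [Dd [i [Ii ->]]]]; by apply: (idlD HP); [apply: DP|apply: HIP].
Qed.

Lemma res_zero : res (@zeroI K R) = @zeroI K T.
Proof. by apply: pred_ext => y; rewrite /res /zeroI; apply: v_eq0. Qed.

Lemma Lsoc_res I : Lsoc I -> Lsoc (res I).
Proof.
elim=> [|J LJ IH|F [J FJ] HF IH].
- by rewrite res_zero; constructor.
- by rewrite res_soc; [constructor | apply: Lsoc_ideal].
- set G := fun J' : T -> Prop => exists J, F J /\ J' = res J.
  have -> : res (fun x => exists I, F I /\ I x) = fun y => exists J', G J' /\ J' y.
    apply: pred_ext => y; split.
      by move=> [J' [FJ' J'y]]; exists (res J'); split => //; exists J'.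
    by move=> [J' [[J'' [FJ'' ->]] Hy]]; exists J''.
  constructor.
    by exists (res J); exists J.
  by move=> J' [J'' [FJ'' ->]]; apply: IH.
Qed.

Lemma Lsoc_res_inv J : Lsoc J -> exists I, Lsoc I /\ J = res I.
Proof.
elim=> [|J' LJ' [I [LI ->]]|F [J0 FJ0] HF IH].
- by exists (@zeroI K R); split; [constructor|rewrite res_zero].
- by exists (soc_over I); split; [constructor|rewrite res_soc //; apply: Lsoc_ideal].
- pose G := fun I => Lsoc I /\ F (res I).
  exists (fun x => exists I, G I /\ I x); split.
    constructor.
      by case: (IH J0 FJ0) => I [LI EI]; exists I; split => //; rewrite -EI.
    by move=> I [].
  apply: pred_ext => y; split.
    move=> [J1 [FJ1 J1y]]; case: (IH J1 FJ1) => I [LI EI].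
    by exists I; split; [split => //; rewrite -EI | rewrite EI in J1y].
  by move=> [I [[LI FI] Iy]]; exists (res I).
Qed.

End Res.

Section LN.
Variables (K : fieldType) (R : comAlgType K) (e : R) (He : e * e = e).
Hypothesis HL : forall I : R -> Prop, Lsoc I -> ~ subI (@fullI K R) I ->
        exists (X : Type) (_ : X), layer_iso I X.
Variables (I0 : R -> Prop) (LI0 : Lsoc I0) (HI0 : subI (@fullI K R) (soc_over I0)) (ne0 : ~ I0 e).

Lemma LN I : Lsoc I -> ~ subI (@fullI K R) I -> exists z, soc_over I z /\ ~ I (z * e).
Proof.
move=> LI nfI; apply: NNPP => H0.
have H : forall z, soc_over I z -> I (z * e).
  by move=> z Sz; apply: NNPP => nI; apply: H0; exists z.
have HI := Lsoc_ideal LI.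
have II0 : subI I I0.
  case: (chain2 LI0 LI) => // H1; exfalso; apply: nfI => x _; apply: H1; exact: HI0.
pose F := fun J => [/\ Lsoc J, subI I J & forall u, J u -> I (u * e)].
pose U := fun x => exists J, F J /\ J x.
have LU : Lsoc U.
  constructor; first by exists I; split => // u Iu; apply: idlMr.
  by move=> J [].
have IU : subI I U by move=> x Ix; exists I; split => //; split => // u Iu; apply: idlMr.
have UP : forall u, U u -> I (u * e) by move=> u [J [[_ _ HJ] Ju]]; apply: HJ.
have nfU : ~ subI (@fullI K R) U.
  by move=> Hf; apply: ne0; apply: II0; rewrite -He; apply: UP; apply: Hf.
have HU := Lsoc_ideal LU.
case: (HL LU nfU) => X [t0 [psi [hlin hmul hfin hsurj hker]]].
have HS := soc_ideal U.
suff SUF : F (soc_over U).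
  case: (lift_delta hsurj t0) => w [Sw Pw].
  have Uw : U w by exists (soc_over U); split.
  have := (proj1 (kerP hker Sw) Uw t0).
  by rewrite Pw delta_eq => /eqP; rewrite oner_eq0.
split; [by constructor | by move=> x /IU; apply: sub_soc | ].
move=> z Sz; apply: NNPP => nIze.
have Sze : soc_over U (z * e) by apply: (idlMr HS).
have nUze : ~ U (z * e) by move=> /UP; rewrite -mulrA He.
have [t Ht] : exists t, psi (z * e) t <> 0.
  apply: fun_neq0 => Hp; apply: nUze; case: (hker _ Sze) => Hk _; exact: Hk.
set a := psi (z * e) t in Ht.
case: (lift_delta hsurj t) => w [Sw Pw].
set v := w * (z * e).
have Sv : soc_over U v by apply: (idlM HS).
have ve' : v * e = v by rewrite /v -!mulrA He.
have ve : forall y, v * y * e = v * y by move=> y; rewrite mulrAC ve'.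
have psiv : forall s, psi v s = delta K t s * psi (z * e) s.
  by move=> s; rewrite /v (psiM hmul) // Pw.
have nIv : ~ I v.
  move=> /IU Uv; have := proj1 (kerP hker Sv) Uv t.
  by rewrite psiv delta_eq mul1r.
pose C := fun x => exists r i, I i /\ x = v * r + i.
have HC : is_ideal C.
  split.
  - by exists 0, 0; split; [apply: idl0 | rewrite mulr0 addr0].
  - move=> x y [r [i [Ii ->]]] [r' [i' [Ii' ->]]]; exists (r + r'), (i + i').
    by split; [apply: idlD | rewrite mulrDr addrACA].
  - move=> q x [r [i [Ii ->]]]; exists (q * r), (q * i).
    by split; [apply: idlM | rewrite mulrDr mulrCA].
suff Cov : covers I C.
  apply: nIv; rewrite -ve'; apply: H; apply: (cover_sub_soc Cov).
  by exists 1, 0; split; [apply: idl0 | rewrite mulr1 addr0].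
split => //.
- by move=> x Ix; exists 0, x; split => //; rewrite mulr0 add0r.
- by move=> HCI; apply: nIv; apply: HCI; exists 1, 0; split; [apply: idl0 | rewrite mulr1 addr0].
move=> M HM IM MC.
case: (classic (subI M I)) => [|nMI]; first by left.
right.
have [m [Mm nIm]] : exists m, M m /\ ~ I m.
  apply: NNPP => Hn; apply: nMI => x Mx; apply: NNPP => nIx; by apply: Hn; exists x.
suff Mv : M v.
  by move=> x [r [i [Ii ->]]]; apply: (idlD HM); [apply: (idlMr HM) | apply: IM].
case: (MC m Mm) => r [i [Ii Em]].
have Svr : soc_over U (v * r) by apply: (idlMr HS).
have nUvr : ~ U (v * r).
  move=> /UP; rewrite ve => Ivr; apply: nIm; rewrite Em; exact: (idlD HI).
have Szer : soc_over U (z * e * r) by apply: (idlMr HS).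
have psivr : forall s, psi (v * r) s = delta K t s * psi (z * e * r) s.
  by move=> s; rewrite /v -mulrA (psiM hmul) // Pw.
set b := psi (v * r) t.
have nb : b != 0.
  apply/eqP => b0; apply: nUvr; apply/(kerP hker Svr) => s.
  case: (classic (s = t)) => [->|nst]; first exact: b0.
  by rewrite psivr delta_neq // mul0r.
set k := a / b.
have Svrw : soc_over U (v * r * w) by apply: (idlMr HS).
set x := v - k *: (v * r * w).
have Sx : soc_over U x by apply: (idlB HS) => //; apply: (idlZ HS).
have Ux : U x.
  apply/(kerP hker Sx) => s.
  rewrite /x (psiB hlin) //; last by apply: (idlZ HS).
  rewrite (psiZ hlin) // (psiM hmul) // Pw.
  case: (classic (s = t)) => [->|nst].
    by rewrite delta_eq mulr1 psiv delta_eq mul1r -/a -/b /k divfK // subrr.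
  by rewrite !delta_neq // mulr0 mulr0 psiv delta_neq // mul0r subrr.
have Ix : I x.
  have := UP _ Ux; congr I.
  rewrite /x mulrBl -scalerAl ve'; congr (_ - _ *: _).
  by rewrite -(mulrA (v * r)) (mulrC w e) mulrA ve.
have -> : v = x + k *: (v * r * w) by rewrite /x subrK.
apply: (idlD HM); first by apply: IM.
apply: (idlZ HM); apply: (idlMr HM).
have -> : v * r = m - i by rewrite Em addrK.
by apply: (idlB HM) => //; apply: IM.
Qed.

End LN.

Lemma list_sub (X : Type) (P : X -> Prop) (s : list X) :
  exists s' : list {t | P t}, forall t', List.In (proj1_sig t') s -> List.In t' s'.
Proof.
elim: s => [|a s [s' Hs']]; first by exists nil.
case: (classic (P a)) => [pa|npa].
  exists (exist _ a pa :: s') => t' [Ha|Ht]; last by right; apply: Hs'.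
  left; case: t' Ha => t pt /= Ha; subst t; congr exist; exact: proof_irrelevance.
exists s' => t' [Ht|Ht]; last by apply: Hs'.
by exfalso; apply: npa; case: t' Ht => t pt /= ->.
Qed.

Section TLayer.
Variables (K : fieldType) (R : comAlgType K) (e : R) (He : e * e = e) (Hn : e != 0).
Hypothesis HL : forall I : R -> Prop, Lsoc I -> ~ subI (@fullI K R) I ->
        exists (X : Type) (_ : X), layer_iso I X.
Variables (I0 : R -> Prop) (LI0 : Lsoc I0) (HI0 : subI (@fullI K R) (soc_over I0)) (ne0 : ~ I0 e).
Local Notation T := (ReT He Hn).
Local Notation v := (@Re_val K R e He Hn).
Local Notation pr := (@Re_proj K R e He Hn).
Local Notation res := (@res K R e He Hn).

Lemma T_layer (J : T -> Prop) : Lsoc J -> ~ subI (@fullI K T) J ->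
  exists (X : Type) (_ : X), layer_iso J X.
Proof.
move=> LJ nfJ; case: (Lsoc_res_inv LJ) => I [LI EJ]; subst J.
have nfI : ~ subI (@fullI K R) I by move=> Hf; apply: nfJ => y _; apply: Hf.
have HI := Lsoc_ideal LI.
have HS := soc_ideal I.
case: (HL LI nfI) => X [t0 [psi [hlin hmul hfin hsurj hker]]].
pose P := fun t => exists w, soc_over I w /\ (forall s, psi w s = delta K t s) /\ psi (w * e) t <> 0.
have cidem : forall w t, soc_over I w -> (forall s, psi w s = delta K t s) ->
    psi (w * e) t <> 0 -> psi (w * e) t = 1.
  move=> w t Sw Pw nz.
  have Swe : soc_over I (w * e) by apply: (idlMr HS).
  have := KL HI hlin hmul hker e Swe Sw Pw; rewrite -mulrA He => Hc.
  have nz' : psi (w * e) t != 0 by apply/eqP.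
  by apply: (mulIf nz'); rewrite mul1r -Hc.
have keyP : forall t, P t -> forall x, soc_over I x -> psi (x * e) t = psi x t.
  move=> t [w [Sw [Pw nz]]] x Sx.
  by rewrite (KL HI hlin hmul hker e Sx Sw Pw) (cidem w t) // mulr1.
have keyNP : forall t, ~ P t -> forall x, soc_over I x -> psi (x * e) t = 0.
  move=> t nP x Sx; case: (lift_delta hsurj t) => w [Sw Pw].
  rewrite (KL HI hlin hmul hker e Sx Sw Pw).
  case: (classic (psi (w * e) t = 0)) => [->|nz]; first by rewrite mulr0.
  by exfalso; apply: nP; exists w.
have [t1 Pt1] : exists t, P t.
  case: (LN He HL LI0 HI0 ne0 LI nfI) => z [Sz nIz].
  have Sze : soc_over I (z * e) by apply: (idlMr HS).
  have [t Ht] : exists t, psi (z * e) t <> 0.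
    apply: fun_neq0 => Hp; apply: nIz; case: (hker _ Sze) => Hk _; exact: Hk.
  exists t; apply: NNPP => nP; apply: Ht.
  by have := keyNP t nP _ Sze; rewrite -mulrA He.
exists {t | P t}, (exist _ t1 Pt1).
exists (fun y t' => psi (v y) (proj1_sig t')).
rewrite -res_soc //.
split.
- move=> a x y Sx Sy; apply: functional_extensionality => t'.
  by rewrite vD vZ hlin.
- move=> x y Sx Sy; apply: functional_extensionality => t'.
  by rewrite vM hmul.
- move=> x Sx; case: (hfin _ Sx) => s Hs.
  case: (list_sub P s) => s' Hs'; exists s' => t' nz; apply: Hs'; apply: Hs; exact: nz.
- move=> g [s Hs].
  pose gt := fun t => match excluded_middle_informative (P t) with
                      | left p => g (exist _ t p) | right _ => 0 end.
  have fgt : fin_supp gt.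
    exists (List.map (@proj1_sig _ _) s) => t; rewrite /gt.
    destruct excluded_middle_informative as [p|np] => // nz.
    by apply: (List.in_map (@proj1_sig _ _) s (exist _ t p)); apply: Hs.
  case: (hsurj _ fgt) => x [Sx Px].
  exists (pr x); split; first by rewrite /res vpr; apply: (idlMr HS).
  apply: functional_extensionality => [[t p]] /=.
  rewrite (keyP t p x Sx) Px /gt.
  destruct excluded_middle_informative as [p'|np]; last by case: np.
  by congr g; congr exist; apply: proof_irrelevance.
- move=> y Sy; split.
  + move=> H0; apply: (proj2 (kerP hker Sy)) => t.
    case: (classic (P t)) => [p|np].
      by have := equal_f H0 (exist _ t p).
    by rewrite -(keyNP t np _ Sy) vP.
  + move=> Iy; have := proj2 (hker _ Sy) Iy => ->; by [].
Qed.

Lemma T_order (I J : R -> Prop) : Lsoc I -> Lsoc J -> subI (res I) (res J) -> subI I J.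
Proof.
move=> LI LJ Hres; apply: NNPP => nIJ.
case: (chain2 LJ LI) => [//|SJI].
have nfJ : ~ subI (@fullI K R) J by move=> Hf; apply: nIJ => x _; apply: Hf.
case: (LN He HL LI0 HI0 ne0 LJ nfJ) => z [Sz nJz].
apply: nJz; have := Hres (pr z); rewrite /res vpr; apply.
apply: SJI; apply: (idlMr (soc_ideal J)) => //.
Qed.

Lemma T_same : same_loewy R T.
Proof.
exists res; split.
- by move=> I; apply: Lsoc_res.
- move=> J LJ; case: (Lsoc_res_inv LJ) => I [LI ->]; by exists I.
- move=> I J LI LJ; split; first by move=> H y; apply: H.
  exact: T_order.
Qed.

Lemma T_vN : vN_regular R -> vN_regular T.
Proof.
move=> HvN y; case: (HvN (v y)) => z Hz; exists (pr z); apply: v_inj.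
by rewrite !vM vpr mulrA -(mulrA (v y * z)) (mulrC e) vP -Hz.
Qed.

Lemma T_inRK : vN_regular R -> in_RK T.
Proof.
move=> HvN; split.
- exact: T_vN.
- exists (res I0); split.
  + exact: Lsoc_res.
  + by move=> Hf; apply: ne0; have := Hf 1 I; rewrite /res v1.
  + by rewrite -res_soc; [move=> y _; apply: HI0 | apply: Lsoc_ideal].
- exact: T_layer.
Qed.

Variables (n : nat) (phi : R -> 'I_n -> K) (i0 : 'I_n).
Hypotheses (hlin0 : forall a x y, soc_over I0 x -> soc_over I0 y ->
         phi (a *: x + y) = (fun t => a * phi x t + phi y t))
  (hmul0 : forall x y, soc_over I0 x -> soc_over I0 y ->
         phi (x * y) = (fun t => phi x t * phi y t))
  (hker0 : forall x, soc_over I0 x -> (phi x = (fun _ => 0) <-> I0 x))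
  (phie : forall s, phi e s = (s == i0)%:R).

Lemma T_top : top_dim T 1.
Proof.
have S0 : forall x, soc_over I0 x by move=> x; apply: HI0.
exists (res I0); split.
- exact: Lsoc_res.
- by move=> Hf; apply: ne0; have := Hf 1 I; rewrite /res v1.
- by rewrite -res_soc; [move=> y _; apply: HI0 | apply: Lsoc_ideal].
exists (fun y _ => phi (v y) i0); split.
- move=> a x y _ _; apply: functional_extensionality => _.
  by rewrite vD vZ hlin0.
- move=> x y _ _; apply: functional_extensionality => _.
  by rewrite vM hmul0.
- move=> x _; exists (ord0 :: nil) => t _; left; symmetry; exact: ord1.
- move=> g _; exists (g ord0 *: 1); split.
    by rewrite -res_soc; [apply: S0 | apply: Lsoc_ideal].
  apply: functional_extensionality => t; rewrite (ord1 t) vZ v1.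
  by rewrite (psiZ hlin0) // phie eqxx mulr1.
- move=> y _; split.
  + move=> H0; apply: (proj2 (kerP hker0 (S0 _))) => s.
    rewrite -vP (psiM hmul0) // phie.
    case: (eqVneq s i0) => [->|ns]; last by rewrite mulr0.
    by rewrite mulr1; apply: (equal_f H0 ord0).
  + move=> Iy; have := proj2 (hker0 (S0 _)) Iy => ->; by [].
Qed.

End TLayer.

Lemma inP (T : eqType) (x : T) (s : seq T) : x \in s -> List.In x s.
Proof.
elim: s => [//|a s IH]; rewrite in_cons => /orP [/eqP ->|/IH H]; by [left|right].
Qed.

Section Idem.
Variables (K : fieldType) (R : comAlgType K) (h : nat -> R).
Hypothesis hid : forall k, h k * h k = h k.

Fixpoint Pp (k : nat) : R := match k with 0 => 1 | k'.+1 => Pp k' * (1 - h k') end.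
Definition Ee k := h k * Pp k.

Lemma oneBid k : (1 - h k) * (1 - h k) = 1 - h k.
Proof. by rewrite mulrBl mul1r mulrBr mulr1 hid subrr subr0. Qed.
Lemma hoBh k : h k * (1 - h k) = 0.
Proof. by rewrite mulrBr mulr1 hid subrr. Qed.

Lemma Pid k : Pp k * Pp k = Pp k.
Proof. elim: k => [|k IH] /=; first by rewrite mulr1. by rewrite mulrACA IH oneBid. Qed.
Lemma Eid k : Ee k * Ee k = Ee k.
Proof. by rewrite /Ee mulrACA hid Pid. Qed.
Lemma Esum m : \sum_(i < m) Ee i = 1 - Pp m.
Proof.
elim: m => [|m IH]; first by rewrite big_ord0 /= subrr.
rewrite big_ord_recr /= IH /Ee; ring.
Qed.
Lemma Porth i d : Pp (i + d)%N.+1 * (1 - h i) = Pp (i + d)%N.+1.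
Proof.
elim: d => [|d IH]; first by rewrite addn0 /= -mulrA oneBid.
by rewrite addnS /= mulrAC IH.
Qed.
Lemma Eorth i j : (i < j)%N -> Ee i * Ee j = 0.
Proof.
move=> lij; have [d ->] : exists d, j = (i + d)%N.+1 by exists (j - i.+1)%N; rewrite -addSn subnKC.
rewrite /Ee -Porth.
have -> : h i * Pp i * (h (i + d)%N.+1 * (Pp (i + d)%N.+1 * (1 - h i))) =
          (h i * (1 - h i)) * (Pp i * (h (i + d)%N.+1 * Pp (i + d)%N.+1))
  by ring.
by rewrite hoBh mul0r.
Qed.
End Idem.

Theorem lemma3p9 (K : fieldType) (R : comAlgType K) (n : nat) :
  in_RK R -> top_dim R n ->
  exists (Ri : 'I_n -> comAlgType K) (f : forall i, {lrmorphism R -> Ri i}),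
    bijective (fun x : R => (fun i => f i x) : forall i, Ri i) /\
    (forall i, [/\ in_RK (Ri i), same_loewy R (Ri i) & top_dim (Ri i) 1%N]).
Proof.
move=> [HvN _ HL] [I0 [LI0 nfI0 HI0 [phi [hlin hmul hfin hsurj hker]]]].
have S0 : forall x, soc_over I0 x by move=> x; apply: HI0.
have finall : forall g : 'I_n -> K, fin_supp g.
  by move=> g; exists (enum 'I_n) => t _; apply: inP; rewrite mem_enum.
have phiM : forall x y s, phi (x * y) s = phi x s * phi y s by move=> x y s; rewrite (psiM hmul).
have phiB : forall x y s, phi (x - y) s = phi x s - phi y s by move=> x y s; rewrite (psiB hlin).
have phi1 : forall s, phi 1 s = 1.
  case: (hsurj _ (finall (fun _ => 1))) => x1 [_ Hx1] s.
  by have := phiM 1 x1 s; rewrite mul1r Hx1 mulr1.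
have n0 : (0 < n)%N.
  case: n phi hlin hmul hfin hsurj hker phiM phiB phi1 finall => [|//] phi' _ _ _ _ hker' _ _ _ _.
  exfalso; apply: nfI0 => x _; apply/(hker' _ (S0 x)).
  by apply: functional_extensionality => -[].
have Hlift : forall k : nat, exists f : R, f * f = f /\ forall s : 'I_n, phi f s = ((s : nat) == k)%:R.
  move=> k; case: (hsurj _ (finall (fun s : 'I_n => ((s : nat) == k)%:R))) => x [_ Px].
  case: (HvN x) => y Hx; exists (x * y); split.
    by rewrite mulrA -Hx.
  move=> s; rewrite phiM.
  have := congr1 (fun z => phi z s) Hx; rewrite /= !phiM Px.
  by case: (_ == _) => /=; rewrite ?mul1r ?mulr1 ?mul0r // => <-.
pose fsel := fun k => proj1_sig (constructive_indefinite_description _ (Hlift k)).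
have fselP : forall k, fsel k * fsel k = fsel k /\ forall s : 'I_n, phi (fsel k) s = ((s : nat) == k)%:R.
  by move=> k; rewrite /fsel; case: constructive_indefinite_description.
pose h := fun k => if k == n.-1 then 1 else fsel k.
have hid : forall k, h k * h k = h k.
  by move=> k; rewrite /h; case: (_ == _); [rewrite mulr1 | apply: (fselP k).1].
have phiP : forall k s, (k <= n.-1)%N -> phi (Pp h k) s = (k <= s)%:R.
  elim=> [|k IH] s Hk /=; first by rewrite phi1.
  rewrite phiM IH; last by apply: ltnW.
  rewrite phiB phi1 /h (ltn_eqF Hk) (fselP k).2.
  by case: (ltngtP k s) => _; rewrite /= ?subr0 ?mulr1 ?mul0r ?subrr ?mulr0.
have phiE : forall (i s : 'I_n), phi (Ee h i) s = (s == i)%:R.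
  move=> i s; rewrite /Ee phiM phiP; last by rewrite -ltnS prednK.
  rewrite /h; case: eqP => [Ei|nEi].
    rewrite phi1 mul1r.
    suff -> : (i <= s)%N = (s == i) by [].
    apply/idP/idP => [H|/eqP ->]; last by rewrite leqnn.
    apply/eqP; apply: val_inj; apply/eqP; rewrite /= eqn_leq H andbT Ei -ltnS prednK //.
  rewrite (fselP i).2; case: (eqVneq s i) => [->|nsi]; first by rewrite eqxx leqnn mulr1.
  by rewrite -[(s : nat) == i]/(s == i) (negbTE nsi) mul0r.
have PnE : Pp h n = 0.
  by rewrite -(prednK n0) /= /h eqxx subrr mulr0.
set e := fun i : 'I_n => Ee h i.
have He : forall i, e i * e i = e i by move=> i; apply: Eid.
have phi0 : forall s, phi 0 s = 0 by move=> s; apply: (psi0 hlin).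
have Hn : forall i, e i != 0.
  move=> i; apply/eqP => E0; have := phiE i i; rewrite -/(e i) E0 phi0 eqxx => /eqP.
  by rewrite eq_sym oner_eq0.
have ne0 : forall i, ~ I0 (e i).
  move=> i Ie; have := proj2 (hker _ (S0 _)) Ie => /(congr1 (fun g => g i)).
  by rewrite phiE eqxx => /eqP; rewrite oner_eq0.
have eorth : forall i j : 'I_n, i != j -> e i * e j = 0.
  move=> i j nij; case: (ltngtP i j) => [lij|lji|eij].
  - exact: Eorth.
  - by rewrite mulrC; apply: Eorth.
  - by exfalso; move/eqP: nij; apply; apply: val_inj.
have esum : \sum_(i < n) e i = 1 by rewrite /e Esum PnE subr0.
exists (fun i => (ReT (He i) (Hn i) : comAlgType K)).
exists (fun i => Re_lrm (He i) (Hn i)).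
split; last first.
  move=> i; split.
  - exact: (T_inRK (He i) (Hn i) HL LI0 HI0 (ne0 i) HvN).
  - exact: (T_same (He i) (Hn i) HL LI0 HI0 (ne0 i)).
  - apply: (T_top (He i) (Hn i) LI0 HI0 (ne0 i) (i0 := i) hlin hmul hker).
    by move=> s; apply: phiE.
exists (fun y => \sum_(i < n) Re_val (y i)).
- move=> x /=; rewrite (eq_bigr (fun i => x * e i)); last by move=> i _.
  by rewrite -mulr_sumr esum mulr1.
- move=> y /=; apply: functional_extensionality_dep => i.
  apply: Re_inj; rewrite vpr mulr_suml (bigD1 i) //= Re_valP big1 ?addr0 //.
  move=> j nji; rewrite -(Re_valP (y j)) -mulrA eorth ?mulr0 //.
Qed.
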